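(* For every contention-resolution protocol of the form described in the context (i.e. every choice of emission probabilities $p_w$, one for each binary word $w$ of length $<k$), one can associate $m+1$ real numbers $z_0,\dots,z_m$ in $[0,1]$ with $0=z_0<z_1<\dots<z_{m-1}<z_m=1$ such that the probability of success (non-collision) of the protocol is $$\rho=\sum_{i\in\{1,\dots,m\}}(z_i-z_{i-1})f'(z_{i-1}),$$ and the probabilities used in the rounds of selection are given by $$p_w=\frac{z_{\#(w)2^{k-l(w)}+2^{k-l(w)}}-z_{\#(w)2^{k-l(w)}+2^{k-l(w)-1}}}{z_{\#(w)2^{k-l(w)}+2^{k-l(w)}}-z_{\#(w)2^{k-l(w)}}}.$$ Conversely, to every family of real numbers $z_0,\dots,z_m$ with $0=z_0<z_1<\dots<z_{m-1}<z_m=1$ one can associate such a selection protocol, with probabilities $p_w$ given by the second formula, whose probability of success is given by the first formula.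
   Context: A random number $n\ge 1$ of stations contend for a channel; $q_n\ge 0$ is the probability that exactly $n$ stations contend, $\sum_{n\geq1}q_n=1$, and $f(x)=\sum_{n\geq1}q_nx^n$ is its generating function. Contention is resolved in $k$ rounds (mini-slots) of selection, and $m=2^k$. For a word $w$ over the alphabet $\{0,1\}$, $l(w)$ denotes its length and $\#(w)$ the integer whose binary representation is $w$. At round $t\in\{1,\dots,k\}$, each station not yet eliminated emits a signal with probability $p_w$, where $w=r(1)\dots r(t-1)$ is the word of previous try-bits, $r(s)\in\{0,1\}$ indicating whether at least one station emitted at round $s$ (so at round 1 the probability is $p_{\emptyset}$). A station that does not emit and hears a signal from another station withdraws; all other stations remain. The protocol succeeds if exactly one station remains after the $k$ rounds; $\rho$ denotes this success probability. *)

(* Defs.v *)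
From Stdlib Require Import Reals List.
From Coquelicot Require Import Coquelicot.
Import ListNotations.
Open Scope R_scope.

(* Words over {0,1}: lists of booleans, read left to right
   (first element = r(1) = most significant bit). *)
Definition word := list bool.

Definition binval (w : word) : nat :=
  fold_left (fun acc (b : bool) => (2 * acc + (if b then 1 else 0))%nat) w 0%nat.

Fixpoint sum1 (f : nat -> R) (n : nat) : R :=
  match n with
  | O => 0
  | S n' => sum1 f n' + f n
  end.

(* Generating function f(x) = sum_{n>=1} q_n x^n (q 0 = 0 is assumed). *)
Definition genf (q : nat -> R) (x : R) : R := Series (fun n => q n * x ^ n).

(* succ p r w n = probability that, when n stations are still in contention,
   the try-bits so far form the word w, and r rounds remain, exactly one
   station remains at the end.  At the current round each of the n stations
   emits independently with probability p w; if j >= 1 stations emit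
   (probability C(n,j) p^j (1-p)^(n-j)), the j emitters remain and the
   try-bit is 1; if nobody emits (probability (1-p)^n) all n remain and the
   try-bit is 0. *)
Fixpoint succ (p : word -> R) (r : nat) (w : word) (n : nat) : R :=
  match r with
  | O => if Nat.eqb n 1 then 1 else 0
  | S r' =>
      (1 - p w) ^ n * succ p r' (w ++ [false]) n
      + sum1 (fun j => Binomial.C n j * p w ^ j * (1 - p w) ^ (n - j)
                         * succ p r' (w ++ [true]) j) n
  end.

Definition rho (k : nat) (q : nat -> R) (p : word -> R) : R :=
  Series (fun n => q n * succ p k [] n).

Definition p_of_z (k : nat) (z : nat -> R) (w : word) : R :=
  let h := (2 ^ (k - length w))%nat in
  let a := (binval w * h)%nat in
  (z (a + h)%nat - z (a + h / 2)%nat) / (z (a + h)%nat - z a).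

Definition rho_of_z (k : nat) (q : nat -> R) (z : nat -> R) : R :=
  sum1 (fun i => (z i - z (i - 1)%nat) * Derive (genf q) (z (i - 1)%nat)) (2 ^ k).

Definition admissible_z (k : nat) (z : nat -> R) : Prop :=
  z 0%nat = 0 /\ z (2 ^ k)%nat = 1 /\ (forall i, (i < 2 ^ k)%nat -> z i < z (S i)).

(* Main.v *)
Require Import Defs.
From Stdlib Require Import Reals List Lia Lra.
From Coquelicot Require Import Coquelicot.
Import ListNotations.
Open Scope R_scope.

Lemma sum1_ext f g n : (forall i, (1 <= i <= n)%nat -> f i = g i) -> sum1 f n = sum1 g n.
Proof. induction n; simpl; intros H; auto. rewrite IHn, (H (S n)); auto; try lia; intros; apply H; lia. Qed.

Lemma sum1_scal c f n : c * sum1 f n = sum1 (fun i => c * f i) n.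
Proof. induction n; simpl; [ring|]. rewrite <- IHn; ring. Qed.

Lemma sum1_plus f g n : sum1 (fun i => f i + g i) n = sum1 f n + sum1 g n.
Proof. induction n; simpl; [ring|]. rewrite IHn; ring. Qed.

Lemma sum1_add f m n : sum1 f (m + n) = sum1 f m + sum1 (fun i => f (m + i)%nat) n.
Proof. induction n; simpl. rewrite Nat.add_0_r; ring. rewrite Nat.add_succ_r; simpl; rewrite IHn; ring. Qed.

Lemma sum1_swap (F : nat -> nat -> R) n H :
  sum1 (fun j => sum1 (fun i => F i j) H) n = sum1 (fun i => sum1 (fun j => F i j) n) H.
Proof. induction n; simpl. induction H as [|H IH]; simpl; auto; rewrite <- IH; ring.
  rewrite IHn, <- sum1_plus; auto. Qed.

Lemma sum1_shift f m : sum1 f (S m) = sum_f_R0 (fun i => f (S i)) m.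
Proof. induction m. simpl; ring. change (sum1 f (S (S m))) with (sum1 f (S m) + f (S (S m))). rewrite IHm; simpl; ring. Qed.

Lemma C_S m i : (i <= m)%nat -> Binomial.C (S m) (S i) * INR (S i) = INR (S m) * Binomial.C m i.
Proof. intros Hi. unfold Binomial.C. replace (S m - S i)%nat with (m - i)%nat by lia.
  rewrite !fact_simpl, !mult_INR.
  assert (H1 := INR_fact_neq_0 i). assert (H2 := INR_fact_neq_0 (m - i)).
  assert (H3 : INR (S i) <> 0) by (apply not_0_INR; lia). field; auto. Qed.

Lemma binom_deriv n a y :
  sum1 (fun j => Binomial.C n j * INR j * a ^ (n - j) * y ^ (j - 1)) n = INR n * (y + a) ^ (n - 1).
Proof.
  destruct n as [|m]. simpl; ring.
  rewrite sum1_shift, binomial. replace (S m - 1)%nat with m by lia.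
  rewrite scal_sum. apply sum_eq. intros i Hi.
  replace (S i - 1)%nat with i by lia. replace (S m - S i)%nat with (m - i)%nat by lia.
  replace (Binomial.C (S m) (S i) * INR (S i)) with (INR (S m) * Binomial.C m i) by (symmetry; apply C_S; lia).
  ring. Qed.

Lemma binval_app w b : binval (w ++ [b]) = (2 * binval w + (if b then 1 else 0))%nat.
Proof. unfold binval; rewrite fold_left_app; reflexivity. Qed.

Lemma binval_lt w : (binval w < 2 ^ length w)%nat.
Proof. induction w using rev_ind. simpl; unfold binval; simpl; lia.
  rewrite binval_app, length_app; simpl length. rewrite Nat.add_1_r, Nat.pow_succ_r'.
  destruct x; lia. Qed.

Lemma fold_acc w acc : fold_left (fun acc (b : bool) => (2 * acc + (if b then 1 else 0))%nat) w acc
   = (acc * 2 ^ length w + binval w)%nat.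
Proof. unfold binval. revert acc; induction w as [|c w IH]; intros acc. simpl; lia.
  cbn [fold_left]. rewrite (IH (2 * acc + _)%nat), (IH (2 * 0 + _)%nat). cbn [length]. rewrite Nat.pow_succ_r'. destruct c; lia. Qed.

Lemma binval_cons b w : binval (b :: w) = ((if b then 1 else 0) * 2 ^ length w + binval w)%nat.
Proof. unfold binval at 1; simpl. rewrite fold_acc. reflexivity. Qed.

Lemma mono k z : admissible_z k z -> forall i d, (i + d <= 2 ^ k)%nat -> (0 < d)%nat -> z i < z (i + d)%nat.
Proof. intros [_ [_ H]] i d; induction d; intros H1 H2. lia.
  destruct d. rewrite Nat.add_1_r; apply H; lia.
  apply Rlt_trans with (z (i + S d)%nat). apply IHd; lia.
  replace (i + S (S d))%nat with (S (i + S d)) by lia. apply H; lia. Qed.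

Lemma key k z p (Hz : admissible_z k z)
  (Hp : forall w : word, (length w < k)%nat -> p w = p_of_z k z w) :
  forall r w, (length w + r = k)%nat -> forall n,
  (z (binval w * 2^r + 2^r)%nat - z (binval w * 2^r)%nat)^n * succ p r w n =
  INR n * sum1 (fun i => (z (binval w * 2^r + i)%nat - z (binval w * 2^r + i - 1)%nat)
        * (z (binval w * 2^r + i - 1)%nat - z (binval w * 2^r)%nat)^(n-1)) (2^r).
Proof.
  induction r as [|r IH]; intros w Hw n.
  - simpl. rewrite !Nat.mul_1_r. replace (binval w + 1 - 1)%nat with (binval w) by lia.
    rewrite Rminus_diag. destruct n as [|[|n]]; simpl; try ring.
  - set (a := (binval w * 2 ^ S r)%nat).
    set (h := (2 ^ r)%nat).
    assert (Eh : (2 ^ S r = h + h)%nat) by (unfold h; rewrite Nat.pow_succ_r'; lia).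
    assert (Ha0 : (binval (w ++ [false]) * 2 ^ r = a)%nat).
    { rewrite binval_app. unfold a. rewrite Eh. fold h. lia. }
    assert (Ha1 : (binval (w ++ [true]) * 2 ^ r = a + h)%nat).
    { rewrite binval_app. unfold a. rewrite Eh. fold h. lia. }
    assert (Hl : forall b, (length (w ++ [b]) + r = k)%nat).
    { intros b; rewrite length_app; simpl; lia. }
    pose proof (fun n => IH _ (Hl false) n) as IH0.
    pose proof (fun n => IH _ (Hl true) n) as IH1.
    rewrite Ha0 in IH0. rewrite Ha1 in IH1. fold h in IH0, IH1.
    assert (Hb : (binval w + 1 <= 2 ^ length w)%nat) by (pose proof (binval_lt w); lia).
    assert (Hk : (a + (h + h) <= 2 ^ k)%nat).
    { unfold a; rewrite Eh. rewrite <- Hw, Nat.pow_add_r, <- Eh.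
      apply Nat.le_trans with ((binval w + 1) * 2 ^ S r)%nat. lia.
      apply Nat.mul_le_mono_r; auto. }
    assert (Hh : (0 < h)%nat) by (unfold h; apply Nat.neq_0_lt_0, Nat.pow_nonzero; lia).
    assert (HAM : z a < z (a + h)%nat) by (apply (mono k z Hz); lia).
    assert (HMB : z (a + h)%nat < z (a + (h + h))%nat).
    { replace (a + (h + h))%nat with (a + h + h)%nat by lia. apply (mono k z Hz); lia. }
    assert (HP : p w = (z (a + (h + h))%nat - z (a + h)%nat) / (z (a + (h + h))%nat - z a)).
    { rewrite Hp by lia. unfold p_of_z. replace (k - length w)%nat with (S r) by lia.
      fold a. rewrite Eh. replace ((h + h) / 2)%nat with h. reflexivity.
      replace (h + h)%nat with (h * 2)%nat by lia. rewrite Nat.div_mul; lia. }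
    cbn [succ]. rewrite Eh. rewrite sum1_add.
    replace (a + h + h)%nat with (a + (h + h))%nat in IH1 by lia.
    set (A := z a) in *. set (M := z (a + h)%nat) in *. set (B := z (a + (h + h))%nat) in *.
    rewrite HP.
    set (P := (B - M) / (B - A)).
    assert (E1 : 1 - P = (M-A)/(B-A)) by (unfold P; field; lra). rewrite E1.
    set (Q := (M - A) / (B - A)).
    assert (EP : B - M = (B - A) * P) by (unfold P; field; lra).
    assert (EQ : M - A = (B - A) * Q) by (unfold Q; field; lra).
    rewrite Rmult_plus_distr_l, Rmult_plus_distr_l.
    f_equal.
    + rewrite <- IH0, EQ, Rpow_mult_distr. ring.
    + rewrite sum1_scal.
      transitivity (sum1 (fun j => sum1 (fun i => Binomial.C n j * (M-A)^(n-j) * (INR j *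
          ((z (a + h + i)%nat - z (a + h + i - 1)%nat) * (z (a + h + i - 1)%nat - M) ^ (j - 1)))) h) n).
      * apply sum1_ext; intros j Hj. rewrite <- sum1_scal, <- sum1_scal.
        rewrite <- IH1.
        replace ((B-A)^n) with ((B-A)^j * (B-A)^(n-j)) by (rewrite <- pow_add; f_equal; lia).
        rewrite EP, EQ, !Rpow_mult_distr. ring.
      * rewrite sum1_swap, sum1_scal. apply sum1_ext; intros i Hi.
        transitivity ((z (a + h + i)%nat - z (a + h + i - 1)%nat) *
           sum1 (fun j => Binomial.C n j * INR j * (M-A)^(n-j) * (z (a + h + i - 1)%nat - M) ^ (j - 1)) n).
        { rewrite sum1_scal; apply sum1_ext; intros; ring. }
        rewrite binom_deriv.
        replace (a + (h + i) - 1)%nat with (a + h + i - 1)%nat by lia.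
        replace (a + (h + i))%nat with (a + h + i)%nat by lia.
        replace (z (a + h + i - 1)%nat - M + (M - A)) with (z (a + h + i - 1)%nat - A) by ring.
        ring.
Qed.

Lemma q_le1 q (hqnn : forall n, 0 <= q n) (hqsum : is_series q 1) n : q n <= 1.
Proof.
  apply is_series_Reals in hqsum.
  assert (H : forall n, sum_f_R0 q n <= 1).
  { apply growing_ineq. intros m; rewrite tech5; specialize (hqnn (S m)); lra.
    intros e He; destruct (hqsum e He) as [N HN]; exists N; intros m Hm; apply HN; auto. }
  destruct n. specialize (H 0%nat); simpl in H; auto.
  specialize (H (S n)). rewrite tech5 in H. pose proof (cond_pos_sum q n hqnn). lra.
Qed.

Lemma radius1 q (hqnn : forall n, 0 <= q n) (hqsum : is_series q 1) : Rbar_le 1 (CV_radius q).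
Proof.
  destruct (CV_radius_bounded q) as [H _]. apply H. exists 1. intros n.
  rewrite pow1, Rmult_1_r, Rabs_pos_eq; auto. apply q_le1; auto.
Qed.

Lemma deriv_genf q (hqnn : forall n, 0 <= q n) (hqsum : is_series q 1) x :
  Rabs x < 1 ->
  ex_series (fun n => q n * INR n * x ^ (n - 1)) /\
  Series (fun n => q n * INR n * x ^ (n - 1)) = Derive (genf q) x.
Proof.
  intros Hx.
  assert (Hr : Rbar_lt (Rabs x) (CV_radius q)).
  { pose proof (radius1 q hqnn hqsum). destruct (CV_radius q); simpl in *; auto; lra. }
  assert (He : ex_series (fun n => q (S n) * INR (S n) * x ^ (S n - 1))).
  { destruct (ex_pseries_derive q x Hr) as [l Hl]. exists l.
    eapply is_series_ext; [|exact Hl]. intros n; simpl. unfold PS_derive, scal; simpl.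
    unfold mult; simpl. rewrite Nat.sub_0_r. rewrite pow_n_pow. ring. }
  assert (He' : ex_series (fun n => q n * INR n * x ^ (n - 1))) by (apply ex_series_incr_1; auto).
  split; auto.
  rewrite Series_incr_1 by auto. change (genf q) with (PSeries q).
  rewrite Derive_PSeries by auto. unfold PSeries.
  replace (q 0%nat * INR 0 * x ^ (0 - 1)) with 0 by (simpl; ring). rewrite Rplus_0_l.
  apply Series_ext; intros n. unfold PS_derive. rewrite Nat.sub_succ, Nat.sub_0_r. ring.
Qed.

Lemma is_series_zero : is_series (fun _ : nat => 0) 0.
Proof. apply is_series_Reals. intros e He. exists 0%nat. intros n _.
  rewrite sum_cte, Rmult_0_l. unfold Rdist, R_dist. rewrite Rminus_diag, Rabs_R0; auto. Qed.

Lemma series_sum1 (F : nat -> nat -> R) H : (forall i, (1<=i<=H)%nat -> ex_series (F i)) ->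
  is_series (fun n => sum1 (fun i => F i n) H) (sum1 (fun i => Series (F i)) H).
Proof. induction H as [|H IH]; intros HF; simpl. apply is_series_zero.
  apply (is_series_plus (V := R_NormedModule)). apply IH; intros; apply HF; lia.
  apply Series_correct, HF; lia. Qed.

Lemma ex_series_cl c a : ex_series a -> ex_series (fun n => c * a n).
Proof. intros [l Hl]. exists (c * l). exact (is_series_scal_l c a l Hl). Qed.

Lemma dir2 k q z p (hqnn : forall n, 0 <= q n) (hqsum : is_series q 1)
  (Hz : admissible_z k z) (Hp : forall w : word, (length w < k)%nat -> p w = p_of_z k z w) :
  rho k q p = rho_of_z k q z.
Proof.
  assert (Hs : forall n, succ p k [] n = INR n * sum1 (fun i => (z i - z (i - 1)%nat) * z (i - 1)%nat ^ (n - 1)) (2 ^ k)).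
  { intros n. pose proof (key k z p Hz Hp k [] eq_refl n) as K.
    change (binval []) with 0%nat in K. rewrite Nat.mul_0_l, !Nat.add_0_l in K.
    destruct Hz as [Z0 [Z1 _]]. rewrite Z0, Z1, Rminus_0_r, pow1, Rmult_1_l in K.
    rewrite K. f_equal. apply sum1_ext; intros i _. rewrite Rminus_0_r; auto. }
  assert (Hrange : forall i, (1 <= i <= 2 ^ k)%nat -> Rabs (z (i - 1)%nat) < 1).
  { intros i Hi. destruct Hz as [Z0 [Z1 Zm]] eqn:E. rewrite Rabs_pos_eq.
    - destruct (Nat.eq_dec (i - 1) (2 ^ k - 1)) as [e|ne].
      + rewrite e, <- Z1. pose proof (Zm (2 ^ k - 1)%nat) as HM.
        replace (S (2 ^ k - 1)) with (2 ^ k)%nat in HM by lia. apply HM; lia.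
      + rewrite <- Z1. pose proof (mono k z Hz (i - 1) (2 ^ k - (i - 1))) as HM.
        replace (i - 1 + (2 ^ k - (i - 1)))%nat with (2 ^ k)%nat in HM by lia. apply HM; lia.
    - destruct (Nat.eq_dec (i - 1) 0) as [e|ne]. rewrite e, Z0; lra.
      rewrite <- Z0. replace (i - 1)%nat with (0 + (i - 1))%nat by lia.
      left; apply (mono k z Hz); lia. }
  unfold rho, rho_of_z.
  rewrite (Series_ext _ (fun n => sum1 (fun i => (z i - z (i - 1)%nat) * (q n * INR n * z (i - 1)%nat ^ (n - 1))) (2 ^ k))).
  2:{ intros n. rewrite Hs, <- Rmult_assoc, sum1_scal. apply sum1_ext; intros; ring. }
  erewrite is_series_unique. 2:{ apply series_sum1. intros i Hi. apply ex_series_cl.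
    apply (deriv_genf q hqnn hqsum), Hrange; auto. }
  apply sum1_ext; intros i Hi. rewrite Series_scal_l. f_equal. apply (deriv_genf q hqnn hqsum), Hrange; auto.
Qed.

Fixpoint Zf (p : word -> R) (u : word) (r : nat) (i : nat) : R :=
  match r with
  | O => if Nat.eqb i 0 then 0 else 1
  | S r' => if Nat.leb i (2 ^ r') then (1 - p u) * Zf p (u ++ [false]) r' i
            else (1 - p u) + p u * Zf p (u ++ [true]) r' (i - 2 ^ r')
  end.

Lemma Zf0 p r u : Zf p u r 0 = 0.
Proof. revert u; induction r; intros u; simpl; auto. rewrite IHr; ring. Qed.

Lemma pow2_pos r : (0 < 2 ^ r)%nat.
Proof. apply Nat.neq_0_lt_0, Nat.pow_nonzero; lia. Qed.

Lemma Zf1 p r u : Zf p u r (2 ^ r) = 1.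
Proof. revert u; induction r; intros u. reflexivity.
  cbn [Zf]. pose proof (pow2_pos r). rewrite Nat.pow_succ_r'.
  destruct (Nat.leb_spec (2 * 2 ^ r) (2 ^ r)). lia.
  replace (2 * 2 ^ r - 2 ^ r)%nat with (2 ^ r)%nat by lia. rewrite IHr; ring. Qed.

Lemma Zf_left p u R X : (X <= 2 ^ R)%nat -> Zf p u (S R) X = (1 - p u) * Zf p (u ++ [false]) R X.
Proof. intros H. cbn [Zf]. destruct (Nat.leb_spec X (2 ^ R)); [auto|lia]. Qed.

Lemma Zf_right p u R X : (X <= 2 ^ R)%nat -> Zf p u (S R) (2 ^ R + X) = (1 - p u) + p u * Zf p (u ++ [true]) R X.
Proof. intros H. cbn [Zf]. destruct (Nat.leb_spec (2 ^ R + X) (2 ^ R)).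
  - assert (X = 0%nat) by lia. subst. rewrite Nat.add_0_r, Zf1, Zf0; ring.
  - replace (2 ^ R + X - 2 ^ R)%nat with X by lia. auto. Qed.

Lemma Zf_mono p k (Hp : forall w : word, (length w < k)%nat -> 0 < p w < 1) :
  forall r u, (length u + r = k)%nat -> forall i, (i < 2 ^ r)%nat -> Zf p u r i < Zf p u r (S i).
Proof.
  induction r as [|r IH]; intros u Hu i Hi.
  - simpl in Hi. assert (i = 0%nat) by lia; subst. simpl; lra.
  - assert (Hpu := Hp u ltac:(lia)).
    assert (Hl : forall b, (length (u ++ [b]) + r = k)%nat) by (intros b; rewrite length_app; simpl; lia).
    rewrite Nat.pow_succ_r' in Hi.
    destruct (Nat.le_gt_cases (S i) (2 ^ r)).
    + rewrite !Zf_left by lia. apply Rmult_lt_compat_l. lra. apply IH; auto.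
    + replace i with (2 ^ r + (i - 2 ^ r))%nat by lia.
      replace (S (2 ^ r + (i - 2 ^ r))) with (2 ^ r + S (i - 2 ^ r))%nat by lia.
      rewrite !Zf_right by lia. apply Rplus_lt_compat_l, Rmult_lt_compat_l. lra. apply IH; auto; lia.
Qed.

Lemma Zf_affine p k (Hp : forall w : word, (length w < k)%nat -> 0 < p w < 1) :
  forall w u r, (length u + length w + r = k)%nat -> exists al be, be <> 0 /\
    forall i, (i <= 2 ^ r)%nat -> Zf p u (length w + r) (binval w * 2 ^ r + i) = al + be * Zf p (u ++ w) r i.
Proof.
  induction w as [|b w IH]; intros u r Hu.
  - exists 0, 1. split. lra. intros i _. rewrite app_nil_r. simpl. ring.
  - assert (Hpu := Hp u ltac:(simpl in Hu; lia)).
    destruct (IH (u ++ [b]) r ltac:(rewrite length_app; simpl in *; lia)) as [al [be [Hbe Hi]]].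
    replace (u ++ b :: w) with ((u ++ [b]) ++ w) by (rewrite <- app_assoc; auto).
    assert (Hb : (binval w + 1 <= 2 ^ length w)%nat) by (pose proof (binval_lt w); lia).
    assert (HX : forall i, (i <= 2 ^ r)%nat -> (binval w * 2 ^ r + i <= 2 ^ (length w + r))%nat).
    { intros i H. rewrite Nat.pow_add_r.
      apply Nat.le_trans with ((binval w + 1) * 2 ^ r)%nat. lia. apply Nat.mul_le_mono_r; auto. }
    cbn [length]. rewrite binval_cons. destruct b.
    + exists ((1 - p u) + p u * al), (p u * be). split. apply Rmult_integral_contrapositive; split; lra.
      intros i H. replace ((1 * 2 ^ length w + binval w) * 2 ^ r + i)%nat with
        (2 ^ (length w + r) + (binval w * 2 ^ r + i))%nat by (rewrite Nat.pow_add_r; lia).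
      rewrite Nat.add_succ_l, Zf_right by auto. rewrite Hi by auto. ring.
    + exists ((1 - p u) * al), ((1 - p u) * be). split. apply Rmult_integral_contrapositive; split; lra.
      intros i H. replace ((0 * 2 ^ length w + binval w) * 2 ^ r + i)%nat with
        (binval w * 2 ^ r + i)%nat by lia.
      rewrite Nat.add_succ_l, Zf_left by auto. rewrite Hi by auto. ring.
Qed.

Theorem proposition1 (k : nat) (q : nat -> R)
  (hq0 : q 0%nat = 0) (hqnn : forall n, 0 <= q n) (hqsum : is_series q 1) :
  (forall p : word -> R,
     (forall w : word, (length w < k)%nat -> 0 < p w < 1) ->
     exists z : nat -> R,
       admissible_z k z /\
       rho k q p = rho_of_z k q z /\
       (forall w : word, (length w < k)%nat -> p w = p_of_z k z w))
  /\
  (forall z : nat -> R, admissible_z k z ->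
     forall p : word -> R,
       (forall w : word, (length w < k)%nat -> p w = p_of_z k z w) ->
       rho k q p = rho_of_z k q z).
Proof.
  split.
  - intros p Hp. exists (Zf p [] k).
    assert (Hadm : admissible_z k (Zf p [] k)).
    { split; [apply Zf0|]. split; [apply Zf1|]. intros i Hi. apply (Zf_mono p k Hp); simpl; auto. }
    assert (Hpz : forall w, (length w < k)%nat -> p w = p_of_z k (Zf p [] k) w).
    { intros w Hw.
      destruct (Zf_affine p k Hp w [] (k - length w) ltac:(simpl; lia)) as [al [be [Hbe Hi]]].
      replace (length w + (k - length w))%nat with k in Hi by lia. simpl app in Hi.
      destruct (Nat.lt_exists_pred 0 (k - length w) ltac:(lia)) as [r' [Er _]].
      rewrite Er in Hi. unfold p_of_z. cbv zeta. rewrite Er.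
      assert (E0' : Zf p [] k (binval w * 2 ^ S r') = al + be * 0).
      { rewrite <- (Zf0 p (S r') w), <- Hi by lia. rewrite Nat.add_0_r; auto. }
      assert (Eh : Zf p [] k (binval w * 2 ^ S r' + 2 ^ S r') = al + be * 1).
      { rewrite <- (Zf1 p (S r') w). apply Hi; lia. }
      assert (Em : (2 ^ S r' / 2 = 2 ^ r')%nat).
      { rewrite Nat.pow_succ_r', Nat.mul_comm, Nat.div_mul; lia. }
      assert (Eq : Zf p [] k (binval w * 2 ^ S r' + 2 ^ r') = al + be * (1 - p w)).
      { rewrite Hi. rewrite Zf_left, Zf1. ring. lia. rewrite Nat.pow_succ_r'; lia. }
      rewrite Em, E0', Eh, Eq.
      replace (al + be * 1 - (al + be * 0)) with be by ring. field; auto. }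
    split; auto. split; auto. apply dir2; auto.
  - intros z Hz p Hp. apply dir2; auto.
Qed.
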